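(* Let $n\ge8$ be an integer. For every integer $k$ with $2\le k\le\lfloor n/2\rfloor-1$, the coefficient of the monomial $T_nT_{n+1-k}T_{k+1}$ in $R_{n+1}$ is $$c^{(n+1)}_{n,n+1-k,k+1}=-2(n+1)\binom{n}{k}.$$
   Context: Let $T_1,T_2,\dots$ be indeterminates, $T_\alpha=T_{\alpha_1}\cdots T_{\alpha_d}$. Define linear operators $L,H$ on monomials (constants sent to $0$): $L(T_{\alpha_1}\cdots T_{\alpha_r})=\sum_{1\le i<j\le r}T_{\alpha_1}\cdots T_{\alpha_i+1}\cdots T_{\alpha_j+1}\cdots T_{\alpha_r}$, $H(T_{\alpha_1}\cdots T_{\alpha_r})=-\frac12\sum_{k=1}^{r}\sum_{l=1}^{\alpha_k-1}\binom{\alpha_k}{l}T_{1+l}T_{1+\alpha_k-l}\prod_{i\ne k}T_{\alpha_i}$. For $n\ge2$ let $A_n=-\sum_{k=1}^{n-1}\binom{n}{k}T_{1+k}T_{1+n-k}T_n$; set $R_2=0$, $R_{n+1}=A_n+L(R_n)+H(R_n)$. $c^{(n)}_\alpha$ is the coefficient of the monomial $T_\alpha$ in $R_n$. *)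

(* Defs.v *)
(* Polynomials in the indeterminates T_1, T_2, ... with
   rational coefficients are represented as formal sums: a list of terms
   (c, alpha), where alpha : seq nat is the list of indices of the monomial
   T_alpha = T_{alpha_1} ... T_{alpha_r} (order irrelevant). *)
From HB Require Import structures.
From mathcomp Require Import all_boot all_order all_algebra.
Set Implicit Arguments.
Unset Strict Implicit.
Unset Printing Implicit Defensive.
Import Order.TTheory GRing.Theory Num.Theory.
Local Open Scope ring_scope.

Definition term := (rat * seq nat)%type.
Definition fpoly := seq term.

Definition coefT (p : fpoly) (alpha : seq nat) : rat :=
  \sum_(t <- p | perm_eq t.2 alpha) t.1.

Definition incr2 (i j : nat) (s : seq nat) : seq nat :=
  set_nth 0%N (set_nth 0%N s i (nth 0%N s i).+1) j (nth 0%N s j).+1.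

Definition rem_at (k : nat) (s : seq nat) : seq nat := take k s ++ drop k.+1 s.

Definition L_term (t : term) : fpoly :=
  let s := t.2 in
  flatten [seq [seq (t.1, incr2 i j s) | j <- iota i.+1 (size s - i.+1)]
          | i <- iota 0 (size s)].

Definition H_term (t : term) : fpoly :=
  let s := t.2 in
  flatten [seq (let a := nth 0%N s k in
                [seq (- (1 / 2) * t.1 * ('C(a, l))%:R,
                      (1 + l)%N :: (1 + a - l)%N :: rem_at k s)
                | l <- iota 1 (a - 1)])
          | k <- iota 0 (size s)].

Definition Lop (p : fpoly) : fpoly := flatten (map L_term p).
Definition Hop (p : fpoly) : fpoly := flatten (map H_term p).

Definition Apoly (n : nat) : fpoly :=
  [seq (- ('C(n, k))%:R, [:: (1 + k)%N; (1 + n - k)%N; n]) | k <- iota 1 (n - 1)].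

(* R_2 = 0, R_{n+1} = A_n + L(R_n) + H(R_n) for n >= 2 (R_0, R_1 := 0, unused) *)
Fixpoint Rpoly (n : nat) : fpoly :=
  if n is m.+1 then
    (if (m < 2)%N then [::] else Apoly m ++ Lop (Rpoly m) ++ Hop (Rpoly m))
  else [::].

(* Main.v *)
Require Import Defs.
From mathcomp Require Import all_boot all_order all_algebra.
From mathcomp Require Import zify ring.
Import GRing.Theory.
Local Open Scope ring_scope.
Set Implicit Arguments.
Unset Strict Implicit.

Definition coefw (f : seq nat -> nat) (p : fpoly) : rat :=
  \sum_(t <- p) t.1 * (f t.2)%:R.

Definition ow (a b c : nat) (s : seq nat) : nat :=
  ((s == [:: a; b; c]) + (s == [:: a; c; b]) + (s == [:: b; a; c]) +
   (s == [:: b; c; a]) + (s == [:: c; a; b]) + (s == [:: c; b; a]))%N.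

Lemma coefw_cat f p q : coefw f (p ++ q) = coefw f p + coefw f q.
Proof. by rewrite /coefw big_cat. Qed.

Lemma coefw_Lop f p : coefw f (Lop p) = \sum_(t <- p) coefw f (L_term t).
Proof.
elim: p => [|t p IH]; first by rewrite /coefw /Lop !big_nil.
by rewrite /Lop /= coefw_cat big_cons -IH.
Qed.

Lemma ow_size a b c s : size s != 3%N -> ow a b c s = 0%N.
Proof.
move=> hs.
have F (x y z : nat) : (s == [:: x; y; z]) = false.
  by apply/eqP => E; move: hs; rewrite E.
by rewrite /ow !F.
Qed.

Lemma ow_big a b c m s : all (fun x => x < m)%N s -> (m == a) || (m == b) || (m == c) -> ow a b c s = 0%N.
Proof.
move=> hs hm.
have F (x y z : nat) : (m == x) || (m == y) || (m == z) -> (s == [:: x; y; z]) = false.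
  move=> hxyz; apply/eqP => E; move: hs; rewrite E /=.
  by case/orP: hxyz => [/orP[]|] /eqP <-; rewrite ltnn ?andbF.
by rewrite /ow !F //; move: hm; rewrite -!orbA => /or3P[] ->; rewrite ?orbT.
Qed.

Lemma size_incr2 i j s : (i < size s)%N -> (j < size s)%N -> size (incr2 i j s) = size s.
Proof.
move=> hi hj; rewrite /incr2 !size_set_nth.
by apply/eqP; rewrite eqn_leq; apply/andP; split; lia.
Qed.

Lemma L_term_size t u : u \in L_term t -> size u.2 = size t.2.
Proof.
rewrite /L_term => /flattenP [v /mapP [i]].
rewrite mem_iota => /andP [_ hi] -> /mapP [j]; rewrite mem_iota => /andP [hj1 hj2] ->.
by rewrite /= size_incr2 //; lia.
Qed.

Lemma L_term_fst t u : u \in L_term t -> u.1 = t.1.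
Proof.
rewrite /L_term => /flattenP [v /mapP [i _] -> /mapP [j _] ->] //.
Qed.

Lemma H_term_size t u : u \in H_term t -> size u.2 = (size t.2).+1.
Proof.
rewrite /H_term => /flattenP [v /mapP [k]].
rewrite mem_iota => /andP [_ hk] -> /mapP [l _] ->.
rewrite /= /rem_at size_cat size_take size_drop.
case: ifP => h; last by move/negbT: h; lia. lia.
Qed.

Definition Inv (m : nat) (p : fpoly) :=
  forall t, t \in p -> (3 <= size t.2)%N /\ (size t.2 = 3%N -> all (fun x => x < m)%N t.2).

Lemma Inv_R m : Inv m (Rpoly m).
Proof.
elim: m => [|m IH]; first by [].
rewrite /=; case: ifP => hm; first by [].
move=> t; rewrite !mem_cat => /or3P [].
- rewrite /Apoly => /mapP [k]; rewrite mem_iota => /andP [h1 h2] -> /=.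
  split=> // _; apply/and4P; split=> //; lia.
- rewrite /Lop => /flattenP [v /mapP [t0 t0in ->] tin].
  have [s0 s3] := IH t0 t0in.
  rewrite (L_term_size tin); split=> // e3.
  move: (s3 e3) tin; case: t0 {t0in s0 s3} e3 => c0 [|x [|y [|z [|w s]]]] //= _.
  move=> /and4P [hx hy hz _].
  rewrite !inE => /or3P [] /eqP -> /=; apply/and4P; split=> //; lia.
- rewrite /Hop => /flattenP [v /mapP [t0 t0in ->] tin].
  have [s0 _] := IH t0 t0in.
  rewrite (H_term_size tin); split; first exact: leqW s0.
  by move=> e; move: s0; rewrite -ltnS e.
Qed.

Lemma eqS_pred (x a : nat) : (0 < a)%N -> (x.+1 == a) = (x == a.-1).
Proof. by case: a. Qed.

Lemma ow_L a b c x y z : (0 < a)%N -> (0 < b)%N -> (0 < c)%N ->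
  (ow a b c [:: x.+1; y.+1; z] + ow a b c [:: x.+1; y; z.+1] + ow a b c [:: x; y.+1; z.+1]
  = ow a.-1 b.-1 c [:: x; y; z] + ow a.-1 b c.-1 [:: x; y; z] + ow a b.-1 c.-1 [:: x; y; z])%N.
Proof.
move=> ha hb hc; rewrite /ow !eqseq_cons !andbT !(eqS_pred _ ha) !(eqS_pred _ hb) !(eqS_pred _ hc).
ring.
Qed.

Lemma coefw_L_term a b c t : (0 < a)%N -> (0 < b)%N -> (0 < c)%N -> (3 <= size t.2)%N ->
  coefw (ow a b c) (L_term t) =
  t.1 * (ow a.-1 b.-1 c t.2 + ow a.-1 b c.-1 t.2 + ow a b.-1 c.-1 t.2)%:R.
Proof.
move=> ha hb hc; case: t => c0 s /=.
case: (ltngtP (size s) 3) => hs h3; first by [lia].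
- have hs' : size s != 3%N by rewrite gtn_eqF.
  rewrite !ow_size // addn0 mulr0.
  rewrite /coefw big1_seq // => u /andP [_ uin].
  by rewrite ow_size ?mulr0 //= (L_term_size uin).
- case: s hs {h3} => [|x [|y [|z [|w s]]]] // _.
  have -> : L_term (c0, [:: x; y; z]) = [:: (c0,[:: x.+1; y.+1; z]); (c0,[:: x.+1; y; z.+1]); (c0,[:: x; y.+1; z.+1])] by [].
  rewrite /coefw !big_cons big_nil /= -ow_L // !natrD; ring.
Qed.

Lemma coefw_Lop_R a b c m p : Inv m p -> (0 < a)%N -> (0 < b)%N -> (0 < c)%N ->
  coefw (ow a b c) (Lop p) =
  coefw (ow a.-1 b.-1 c) p + coefw (ow a.-1 b c.-1) p + coefw (ow a b.-1 c.-1) p.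
Proof.
move=> hI ha hb hc; rewrite coefw_Lop.
rewrite (eq_big_seq (fun t => t.1 * (ow a.-1 b.-1 c t.2 + ow a.-1 b c.-1 t.2 + ow a b.-1 c.-1 t.2)%:R)); last first.
  by move=> t tin; rewrite coefw_L_term //; case: (hI t tin).
rewrite /coefw -!big_split /=; apply: eq_bigr => t _.
by rewrite !natrD; ring.
Qed.

Lemma coefw_Hop a b c m p : Inv m p -> coefw (ow a b c) (Hop p) = 0.
Proof.
move=> hI; rewrite /coefw big1_seq // => u /andP [_].
rewrite /Hop => /flattenP [v /mapP [t tin ->] uin].
have [h3 _] := hI t tin.
rewrite ow_size ?mulr0 // (H_term_size uin) /=; apply/eqP => e; move: h3; rewrite -ltnS e.
by [].
Qed.

Lemma coefw_zero a b c m p : Inv m p -> (m == a) || (m == b) || (m == c) ->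
  coefw (ow a b c) p = 0.
Proof.
move=> hI hm; rewrite /coefw big1_seq // => t /andP [_ tin].
have [h3 h] := hI t tin.
case: (eqVneq (size t.2) 3) => e.
- by rewrite (ow_big (h e) hm) mulr0.
- by rewrite ow_size ?mulr0.
Qed.

Lemma ow_A M b c k : (b + c = M + 2)%N -> (2 <= b)%N -> (2 <= c)%N -> (1 <= k)%N -> (k <= M - 1)%N ->
  ow M b c [:: (1 + k)%N; (1 + M - k)%N; M] =
  ((k == b.-1) + (k == c.-1) + ((c == M) && (k == M.-1)) + ((b == M) && (k == M.-1))
   + ((c == M) && (k == 1%N)) + ((b == M) && (k == 1%N)))%N.
Proof.
move=> hbc hb hc hk1 hk2; rewrite /ow !eqseq_cons !eqxx !andbT.
have -> : [&& (1 + k == M)%N, (1 + M - k == b)%N & (M == c)] = (c == M) && (k == M.-1).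
  by apply/idP/idP; lia.
have -> : [&& (1 + k == M)%N, (1 + M - k == c)%N & (M == b)] = (b == M) && (k == M.-1).
  by apply/idP/idP; lia.
have -> : [&& (1 + k == b)%N, (1 + M - k == M)%N & (M == c)] = (c == M) && (k == 1%N).
  by apply/idP/idP; lia.
have -> : [&& (1 + k == c)%N, (1 + M - k == M)%N & (M == b)] = (b == M) && (k == 1%N).
  by apply/idP/idP; lia.
have -> : ((1 + k == b)%N && (1 + M - k == c)%N) = (k == b.-1).
  by apply/idP/idP; lia.
have -> : ((1 + k == c)%N && (1 + M - k == b)%N) = (k == c.-1).
  by apply/idP/idP; lia.
ring.
Qed.

Lemma sum_pick (F : nat -> rat) r i : uniq r -> i \in r ->
  \sum_(k <- r) F k * (k == i)%:R = F i.
Proof.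
move=> ur ir; rewrite (bigD1_seq i) //= eqxx mulr1 big1 ?addr0 //.
by move=> k /negbTE ->; rewrite mulr0.
Qed.

Lemma sum_pickP (F : nat -> rat) r (P : bool) i : uniq r -> (P -> i \in r) ->
  \sum_(k <- r) F k * (P && (k == i))%:R = P%:R * F i.
Proof.
case: P => /= ur ir; first by rewrite sum_pick ?mul1r //; apply: ir.
by rewrite mul0r big1 // => k _; rewrite mulr0.
Qed.

Lemma coefw_A M b c : (2 <= M)%N -> (b + c = M + 2)%N -> (2 <= b)%N -> (2 <= c)%N ->
  coefw (ow M b c) (Apoly M) =
  - (('C(M, b.-1) + 'C(M, c.-1) + (c == M) * 'C(M, M.-1) + (b == M) * 'C(M, M.-1)
      + (c == M) * 'C(M, 1) + (b == M) * 'C(M, 1))%N%:R).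
Proof.
move=> hM hbc hb hc.
rewrite /coefw /Apoly big_map /=.
pose G k : rat := - ('C(M, k))%:R * (k == b.-1)%:R + - ('C(M, k))%:R * (k == c.-1)%:R
   + - ('C(M, k))%:R * ((c == M) && (k == M.-1))%:R + - ('C(M, k))%:R * ((b == M) && (k == M.-1))%:R
   + - ('C(M, k))%:R * ((c == M) && (k == 1%N))%:R + - ('C(M, k))%:R * ((b == M) && (k == 1%N))%:R.
rewrite (eq_big_seq G); last first.
  by move=> k; rewrite mem_iota => /andP [h1 h2]; rewrite ow_A /G ?natrD ?mulrDr //; lia.
have U : uniq (iota 1 (M - 1)) by apply: iota_uniq.
have I i : (1 <= i <= M - 1)%N -> i \in iota 1 (M - 1) by rewrite mem_iota; lia.
rewrite /G !big_split /=.
rewrite !sum_pick ?I //; try lia.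
rewrite !sum_pickP //; try (move=> _; apply: I; lia).
rewrite !natrD !natrM; ring.
Qed.

Lemma RpolyS m : (2 <= m)%N -> Rpoly m.+1 = Apoly m ++ Lop (Rpoly m) ++ Hop (Rpoly m).
Proof. by move=> hm /=; rewrite ifF //; apply/negbTE; rewrite -leqNgt. Qed.

Lemma top m : (2 <= m)%N -> forall b c, (b + c = m + 2)%N -> (2 <= b)%N -> (2 <= c)%N ->
  coefw (ow m b c) (Rpoly m.+1) = - (2%:R * (m.+1)%:R * ('C(m, b.-1))%:R).
Proof.
elim: m => [//|m IH] hm b c hbc hb hc.
case: (eqVneq m 1) => [em|hm1].
  subst m; have eb : b = 2%N by lia.
  have ec : c = 2%N by lia.
  subst b c; rewrite RpolyS // coefw_cat coefw_A //.
  rewrite /coefw /= big_nil addr0 !bin1; ring.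
have hm2 : (2 <= m)%N by lia.
rewrite RpolyS // !coefw_cat (@coefw_Hop _ _ _ _ _ (@Inv_R m.+1)) addr0.
rewrite (@coefw_Lop_R _ _ _ _ _ (@Inv_R m.+1)) //; try lia.
rewrite (@coefw_zero m.+1 b.-1 c.-1 m.+1 _ (@Inv_R m.+1)) ?eqxx // addr0.
rewrite coefw_A //; try lia.
have [b2|b3] := eqVneq b 2%N.
  subst b; have ec : c = m.+1 by lia. subst c.
  rewrite (@coefw_zero m 1 m.+1 m.+1 _ (@Inv_R m.+1)) ?eqxx ?orbT // add0r.
  rewrite IH //; try lia.
  rewrite (_ : (2 == m.+1) = false); last by apply/eqP; lia.
  rewrite /= !bin1 binSn !mul1n !mul0n !addn0 !natrD -!natr1; ring.
have [c2|c3] := eqVneq c 2%N.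
  subst c; have eb : b = m.+1 by lia. subst b.
  rewrite (@coefw_zero m m.+1 1 m.+1 _ (@Inv_R m.+1)) ?eqxx ?orbT // addr0.
  rewrite IH //; try lia.
  rewrite (_ : (2 == m.+1) = false); last by apply/eqP; lia.
  have -> : 'C(m, m.-1) = m by case: (m) hm2 => [|m'] //= _; rewrite binSn.
  rewrite /= !bin1 binSn !mul1n !mul0n !addn0 !natrD -!natr1; ring.
rewrite IH //; try lia. rewrite IH //; try lia.
rewrite (_ : (c == m.+1) = false); last by apply/eqP; lia.
rewrite (_ : (b == m.+1) = false); last by apply/eqP; lia.
have -> : c.-1 = (m.+1 - b.-1)%N by lia.
rewrite bin_sub; last by lia.
case: b hb hbc b3 => [|[|b]] //= _ hbc _.
rewrite binS !mul0n !addn0 !natrD -!natr1; ring.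
Qed.

Lemma perm3 (a b c : nat) s : a != b -> a != c -> b != c ->
  nat_of_bool (perm_eq s [:: a; b; c]) = ow a b c s.
Proof.
move=> /negbTE hab /negbTE hac /negbTE hbc.
have hba : (b == a) = false by rewrite eq_sym.
have hca : (c == a) = false by rewrite eq_sym.
have hcb : (c == b) = false by rewrite eq_sym.
case H: (perm_eq s [:: a; b; c]).
- case: s H => [|x [|y [|z [|w s]]]] H; try by move/perm_size: H.
  have hx : x \in [:: a; b; c] by rewrite -(perm_mem H) !inE eqxx.
  have hy : y \in [:: a; b; c] by rewrite -(perm_mem H) !inE eqxx ?orbT.
  have hz : z \in [:: a; b; c] by rewrite -(perm_mem H) !inE eqxx ?orbT.
  move: hx hy hz H; rewrite !inE => /or3P[]/eqP-> /or3P[]/eqP-> /or3P[]/eqP->;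
  rewrite /ow /perm_eq /= ?eqseq_cons !eqxx ?hab ?hac ?hbc ?hba ?hca ?hcb //=.
- have F (β : seq nat) : perm_eq β [:: a; b; c] -> (s == β) = false.
    by move=> hβ; apply/eqP => E; move: H; rewrite E hβ.
  rewrite /ow !F //; rewrite /perm_eq /= !eqxx ?hab ?hac ?hbc ?hba ?hca ?hcb //=.
Qed.
Unset Implicit Arguments.

Lemma coefT_w p al : coefT p al = coefw (fun s => nat_of_bool (perm_eq s al)) p.
Proof.
rewrite /coefT /coefw big_mkcond /=; apply: eq_bigr => t _.
by case: (perm_eq t.2 al); rewrite ?mulr1 ?mulr0.
Qed.

Theorem mainTheorem15 (n k : nat) :
  (8 <= n)%N -> (2 <= k)%N -> (k <= n %/ 2 - 1)%N ->
  coefT (Rpoly n.+1) [:: n; (n + 1 - k)%N; k.+1] =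
  - (2 * (n + 1)%:R * ('C(n, k))%:R : rat).
Proof.
move=> h8 hk2 hk.
have d1 : n != (n + 1 - k)%N by apply/eqP; lia.
have d2 : n != k.+1 by apply/eqP; lia.
have d3 : (n + 1 - k)%N != k.+1 by apply/eqP; lia.
rewrite coefT_w.
have -> : coefw (fun s => nat_of_bool (perm_eq s [:: n; (n + 1 - k)%N; k.+1])) (Rpoly n.+1)
   = coefw (ow n (n + 1 - k) k.+1) (Rpoly n.+1).
  by rewrite /coefw; apply: eq_bigr => t _; rewrite perm3.
rewrite top //; try lia.
have -> : (n + 1 - k).-1 = (n - k)%N by lia.
by rewrite bin_sub ?addn1 //; lia.
Qed.
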